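(* A ring $R$ is CSNC if and only if (1) every clean element of $R$ is strongly clean, and (2) $R$ is a UU-ring.
   Context: All rings are associative with identity $1$. For a ring $R$, $\mathrm{Id}(R)$, $U(R)$, $\mathrm{Nil}(R)$ denote the sets of idempotents, units and nilpotent elements. An element $a\in R$ is clean if $a=e+u$ for some $e\in\mathrm{Id}(R)$, $u\in U(R)$, and strongly clean if such $e,u$ can be chosen with $eu=ue$ (equivalently $ea=ae$). An element $a$ is strongly nil-clean if $a=e+q$ with $e\in \mathrm{Id}(R)$, $q\in\mathrm{Nil}(R)$ and $eq=qe$. A ring $R$ is called CSNC if every clean element of $R$ is strongly nil-clean. $R$ is a UU-ring if $U(R)=1+\mathrm{Nil}(R)$. *)

(* Defs.v *)
From mathcomp Require Import all_boot all_algebra.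
Set Implicit Arguments. Unset Strict Implicit. Unset Printing Implicit Defensive.
Import GRing.Theory.
Local Open Scope ring_scope.

Section Defs.
Variable R : unitRingType.

Definition idempotent (e : R) : Prop := e * e = e.
Definition nilpotent (q : R) : Prop := exists n : nat, q ^+ n = 0.

Definition clean (a : R) : Prop :=
  exists e u : R, idempotent e /\ u \is a GRing.unit /\ a = e + u.

Definition strongly_clean (a : R) : Prop :=
  exists e u : R, idempotent e /\ u \is a GRing.unit /\ a = e + u /\ e * u = u * e.

Definition strongly_nil_clean (a : R) : Prop :=
  exists e q : R, idempotent e /\ nilpotent q /\ a = e + q /\ e * q = q * e.

Definition CSNC : Prop := forall a : R, clean a -> strongly_nil_clean a.

Definition UU_ring : Prop :=
  forall u : R, u \is a GRing.unit <-> exists q : R, nilpotent q /\ u = 1 + q.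
End Defs.

(* Main.v *)
Require Import Defs.
From mathcomp Require Import all_boot all_algebra zify.
Import GRing.Theory.
Local Open Scope ring_scope.

Section Aux.
Variable R : unitRingType.

Lemma nil_le {x : R} {n k : nat} : x ^+ n = 0 -> (n <= k)%N -> x ^+ k = 0.
Proof. by move=> Hx Hk; rewrite -(subnKC Hk) exprD Hx mul0r. Qed.

Lemma nil_add (a b : R) : GRing.comm a b -> nilpotent a -> nilpotent b ->
  nilpotent (a + b).
Proof.
move=> hc [n Hn] [m Hm]; exists (n + m)%N.
rewrite exprDn_comm // big1 // => i _.
case: (leqP m i) => hi.
  by rewrite (nil_le Hm hi) mulr0 mul0rn.
rewrite (@nil_le a n) ?mul0r ?mul0rn //.
have := ltn_ord i; lia.
Qed.

Lemma nilN (q : R) : nilpotent q -> nilpotent (- q).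
Proof. by case=> n Hn; exists n; rewrite exprNn Hn mulr0. Qed.

Lemma unit_1nil (q : R) : nilpotent q -> (1 + q) \is a GRing.unit.
Proof.
case=> n Hn; apply/unitrP.
pose S := \sum_(i < n) (- q) ^+ i.
have H1 : (1 + q) * S = 1.
  have := subrX1 (- q) n.
  rewrite exprNn Hn mulr0 sub0r -opprD addrC mulNr => /eqP.
  by rewrite eqr_opp => /eqP <-.
have hc : GRing.comm (1 + q) S.
  apply: commr_sum => i _; apply: commrX; apply: commrN.
  apply: commr_sym; apply: commrD; [exact: commr1 | exact: commr_refl].
by exists S; split => //; rewrite -hc.
Qed.

Lemma unit_add_nil (u q : R) : u \is a GRing.unit -> nilpotent q ->
  GRing.comm u q -> (u + q) \is a GRing.unit.
Proof.
move=> Hu [n Hn] hc.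
have -> : u + q = u * (1 + u^-1 * q) by rewrite mulrDr mulr1 mulrA divrr // mul1r.
rewrite unitrMr ?Hu //; apply: unit_1nil; exists n.
rewrite exprMn_comm ?Hn ?mulr0 //.
apply: commr_sym; apply: commrV; exact: commr_sym.
Qed.

Lemma comm_1B (x e : R) : GRing.comm x e -> GRing.comm x (1 - e).
Proof. by move=> h; apply: commrB => //; exact: commr1. Qed.

Lemma idem_1B (e : R) : Defs.idempotent e -> Defs.idempotent (1 - e).
Proof.
rewrite /Defs.idempotent => He.
by rewrite mulrBl mul1r mulrBr mulr1 He subrr subr0.
Qed.

End Aux.

Theorem theorem2p4 (R : unitRingType) :
  CSNC R <-> ((forall a : R, clean a -> strongly_clean a) /\ UU_ring R).
Proof.
split.
- move=> H; split.
  + move=> a /H [e [q [He [Hq [-> hc]]]]].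
    have ce : GRing.comm e q := hc.
    pose w := e *+ 2 - 1.
    have ww : w * w = 1.
      rewrite /w mulrBl mulrBr mul1r mulr1 mulrnAl mulrnAr He.
      by set y := e *+ 2; rewrite opprB mulr2n addrK addrC subrK.
    have cew : GRing.comm e w.
      by apply: commrB; [apply: commrMn; exact: commr_refl | exact: commr1].
    exists (1 - e), (w + q); split; first exact: idem_1B.
    split.
      apply: unit_add_nil => //; first by apply/unitrP; exists w.
      apply: commr_sym; apply: commrB; [apply: commrMn; exact: commr_sym | exact: commr1].
    split.
      by rewrite /w addrA; congr (_ + q); rewrite addrCA (addrAC 1) subrr add0r mulr2n addrK.
    apply: commr_sym; apply: comm_1B; apply: commr_sym.
    by apply: commrD.
  + move=> u; split.
    * move=> Hu.
      have : clean u by exists 0, u; rewrite /Defs.idempotent mul0r add0r.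
      move/H=> [e [q [He [Hq [Eu hc]]]]].
      have cuq : GRing.comm u q.
        by rewrite Eu; apply: commr_sym; apply: commrD; [exact: commr_sym hc| exact: commr_refl].
      have Ue : e \is a GRing.unit.
        have -> : e = u + - q by rewrite Eu addrK.
        by apply: unit_add_nil => //; [exact: nilN | exact: commrN].
      have e1 : e = 1 by apply: (mulrI Ue); rewrite He mulr1.
      by exists q; rewrite Eu e1.
    * by case=> q [Hq ->]; exact: unit_1nil.
- case=> H1 HU a /H1 [e [u [He [Hu [Ea hc]]]]].
  case/HU: Hu => q [Hq Eu].
  have ceq : GRing.comm e q.
    move: hc; rewrite Eu mulrDr mulrDl mulr1 mul1r => /addrI; exact.
  have [n Hn] : nilpotent (1 + 1 : R).
    case/HU: (unitrN1 R) => p [Hp Ep].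
    have -> : (1 + 1 : R) = - p by rewrite -[p](addKr 1) -Ep opprD opprK.
    exact: nilN.
  have c2e : GRing.comm (1 + 1 : R) e.
    by apply: commr_sym; apply: commrD; exact: commr1.
  exists (1 - e), ((1 + 1) * e + q); split; first exact: idem_1B.
  split.
    apply: nil_add.
    + apply: commr_sym; apply: commrM; first by apply: commrD; exact: commr1.
      exact: commr_sym.
    + by exists n; rewrite exprMn_comm // Hn mul0r.
    + exact: Hq.
  split.
    by rewrite Ea Eu mulrDl mul1r !addrA subrK (addrC e).
  apply: commr_sym; apply: comm_1B; apply: commr_sym.
  apply: commrD => //; apply: commrM => //; exact: commr_sym.
Qed.
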